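(* Let $A$ be a nonempty linearly closed subset of the abstract linear space $LS^3$ which is neither a single point nor an abstract line. Then $A$ is not locally embedded in $\mathbb{C}$; that is, there is a point $x\in A$ such that no neighborhood of $x$ in $A$ admits a continuous injective map into $\mathbb{C}$.
   Context: $\mathbb{S}^3$ is the unit sphere of $\mathbb{C}^2$ (with the subspace topology). The abstract linear space $LS^3$ has point set $\mathbb{S}^3$ and abstract lines the sets $L\cap\mathbb{S}^3$ where $L$ is a complex affine line of $\mathbb{C}^2$ meeting $\mathbb{S}^3$ in more than one point (such a set is a round circle); any two distinct points of $\mathbb{S}^3$ lie on exactly one abstract line. A subset $A\subset\mathbb{S}^3$ is linearly closed if for any two distinct $x,y\in A$ the abstract line through $x$ and $y$ is contained in $A$. *)

(* Defs.v *)
From Stdlib Require Import Reals.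
From Coquelicot Require Import Coquelicot.
Open Scope R_scope.

Definition C2 : Type := (C * C)%type.

Definition sphere3 (p : C2) : Prop :=
  (Cmod (fst p)) ^ 2 + (Cmod (snd p)) ^ 2 = 1.

Definition dist2 (p q : C2) : R :=
  sqrt ((Cmod (fst p - fst q)%C) ^ 2 + (Cmod (snd p - snd q)%C) ^ 2).

Definition complex_affine_line (L : C2 -> Prop) : Prop :=
  exists a v : C2, v <> (@pair C C 0%C 0%C) /\
    forall p, L p <-> exists t : C, p = ((fst a + t * fst v)%C, (snd a + t * snd v)%C).

Definition abstract_line (l : C2 -> Prop) : Prop :=
  exists L, complex_affine_line L /\
    (exists x y : C2, x <> y /\ L x /\ sphere3 x /\ L y /\ sphere3 y) /\
    (forall p, l p <-> (L p /\ sphere3 p)).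

Definition linearly_closed (A : C2 -> Prop) : Prop :=
  (forall p, A p -> sphere3 p) /\
  (forall x y, A x -> A y -> x <> y ->
     forall l, abstract_line l -> l x -> l y -> forall p, l p -> A p).

Definition nbhd_in (A U : C2 -> Prop) (x : C2) : Prop :=
  (forall p, U p -> A p) /\ U x /\
  exists eps, 0 < eps /\ forall p, A p -> dist2 p x < eps -> U p.

Definition cont_inj_on (U : C2 -> Prop) (f : C2 -> C) : Prop :=
  (forall p q, U p -> U q -> f p = f q -> p = q) /\
  (forall p, U p -> forall eps, 0 < eps ->
     exists delta, 0 < delta /\
       forall q, U q -> dist2 q p < delta -> Cmod (f q - f p)%C < eps).

(* Main.v *)
Require Import Defs.
From Stdlib Require Import Reals Lra Lia Psatz Classical ClassicalEpsilon.
From Coquelicot Require Import Coquelicot.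
Open Scope R_scope.

Definition dotr (a b : C) := fst a * fst b + snd a * snd b.
Definition crs (a b : C) := fst a * snd b - snd a * fst b.
Definition n2 (a : C) := fst a * fst a + snd a * snd a.
Definition good a b := Rabs (crs a b) < dotr a b.
Definition ang a b := atan (crs a b / dotr a b).

Lemma atan_bound t : Rabs t < 1 -> -(PI/4) < atan t < PI/4.
Proof.
  intro H. apply Rabs_def2 in H.
  assert (atan (- (1)) < atan t) by (apply atan_increasing; lra).
  assert (atan t < atan 1) by (apply atan_increasing; lra).
  rewrite atan_opp, atan_1 in *. lra.
Qed.

Lemma atan_add t1 t2 : Rabs t1 < 1 -> Rabs t2 < 1 ->
  atan t1 + atan t2 = atan ((t1+t2)/(1 - t1*t2)).
Proof.
  intros H1 H2.
  pose proof (atan_bound _ H1). pose proof (atan_bound _ H2).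
  pose proof PI_RGT_0.
  rewrite <- (atan_tan (atan t1 + atan t2)) by lra.
  f_equal. rewrite tan_plus.
  - rewrite !tan_atan. reflexivity.
  - apply Rgt_not_eq, cos_gt_0; lra.
  - apply Rgt_not_eq, cos_gt_0; lra.
  - apply Rgt_not_eq, cos_gt_0; lra.
  - rewrite !tan_atan. apply Rabs_def2 in H1. apply Rabs_def2 in H2.
    assert (t1*t2 < 1).
    { destruct (Rle_dec 0 t1); destruct (Rle_dec 0 t2); nra. }
    lra.
Qed.

Lemma id1 a b c : dotr a b * dotr b c - crs a b * crs b c = n2 b * dotr a c.
Proof. unfold dotr, crs, n2; ring. Qed.
Lemma id2 a b c : dotr a b * crs b c + crs a b * dotr b c = n2 b * crs a c.
Proof. unfold dotr, crs, n2; ring. Qed.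

Lemma good_pos a b : good a b -> 0 < dotr a b.
Proof. unfold good; intro H. pose proof (Rabs_pos (crs a b)); lra. Qed.

Lemma good_n2 a b : good a b -> 0 < n2 b /\ 0 < n2 a.
Proof.
  intro H. apply good_pos in H. unfold dotr, n2 in *.
  destruct a as [a1 a2], b as [b1 b2]; simpl in *.
  split.
  - destruct (Req_dec b1 0); destruct (Req_dec b2 0); subst; try nra.
  - destruct (Req_dec a1 0); destruct (Req_dec a2 0); subst; try nra.
Qed.

Lemma good_prod a b c : good a b -> good b c -> crs a b * crs b c < dotr a b * dotr b c.
Proof.
  unfold good; intros H1 H2.
  apply Rle_lt_trans with (Rabs (crs a b) * Rabs (crs b c)).
  - rewrite <- Rabs_mult. apply Rle_abs.
  - pose proof (Rabs_pos (crs a b)); pose proof (Rabs_pos (crs b c)). nra.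
Qed.

Lemma ratio_lt a b : good a b -> Rabs (crs a b / dotr a b) < 1.
Proof.
  intro H. pose proof (good_pos _ _ H). unfold good in H.
  unfold Rdiv. rewrite Rabs_mult, Rabs_inv, (Rabs_right (dotr a b)) by lra.
  apply Rmult_lt_reg_r with (dotr a b); auto.
  rewrite Rmult_assoc, Rinv_l by lra. lra.
Qed.

Lemma ang_add a b c : good a b -> good b c -> ang a b + ang b c = ang a c.
Proof.
  intros H1 H2. unfold ang.
  rewrite atan_add by (apply ratio_lt; auto).
  f_equal.
  pose proof (good_pos _ _ H1). pose proof (good_pos _ _ H2).
  pose proof (good_prod _ _ _ H1 H2). destruct (good_n2 _ _ H1) as [Hb _].
  pose proof (id1 a b c). pose proof (id2 a b c).
  assert (Hac : 0 < dotr a c).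
  { apply Rmult_lt_reg_l with (n2 b); auto. lra. }
  transitivity ((crs a b * dotr b c + dotr a b * crs b c) /
                (dotr a b * dotr b c - crs a b * crs b c)).
  - field. repeat split; lra.
  - rewrite id1. replace (crs a b * dotr b c + dotr a b * crs b c) with (n2 b * crs a c) by lra.
    field. lra.
Qed.

Lemma ang_same a : ang a a = 0.
Proof. unfold ang, crs. replace (fst a * snd a - snd a * fst a) with 0 by ring.
  unfold Rdiv. rewrite Rmult_0_l. apply atan_0. Qed.

Lemma ang_opp a b : ang (-a)%C (-b)%C = ang a b.
Proof. unfold ang, crs, dotr. simpl. f_equal. f_equal; ring. Qed.

Lemma Cmod_n2 a : Cmod a * Cmod a = n2 a.
Proof. unfold Cmod, n2. rewrite sqrt_sqrt. ring. nra. Qed.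

Lemma lagrange a b : dotr a b ^ 2 + crs a b ^ 2 = n2 a * n2 b.
Proof. unfold dotr, crs, n2; ring. Qed.

Lemma n2_nonneg a : 0 <= n2 a.
Proof. unfold n2; nra. Qed.



Lemma sq_le_abs x y : 0 <= y -> x * x <= y * y -> Rabs x <= y.
Proof.
  intros Hy H. destruct (Rle_dec 0 x).
  - rewrite Rabs_right by lra. nra.
  - rewrite Rabs_left by lra. nra.
Qed.

Lemma CS_bound a b : Rabs (dotr a b) <= Cmod a * Cmod b /\ Rabs (crs a b) <= Cmod a * Cmod b.
Proof.
  pose proof (Cmod_ge_0 a); pose proof (Cmod_ge_0 b).
  pose proof (lagrange a b). pose proof (Cmod_n2 a); pose proof (Cmod_n2 b).
  assert (HH : (Cmod a * Cmod b)*(Cmod a * Cmod b) = n2 a * n2 b) by nra.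
  split; apply sq_le_abs; try nra.
Qed.

Lemma polar_step a b : good a b ->
  dotr a b = Cmod a * Cmod b * cos (ang a b) /\ crs a b = Cmod a * Cmod b * sin (ang a b).
Proof.
  intro H. pose proof (good_pos _ _ H) as Hd.
  unfold ang. rewrite cos_atan, sin_atan.
  set (t := crs a b / dotr a b).
  assert (Hs : Cmod a * Cmod b = dotr a b * sqrt (1 + t²)).
  { unfold Cmod. rewrite <- sqrt_mult_alt by nra.
    rewrite <- (sqrt_Rsqr (dotr a b)) by lra.
    rewrite <- sqrt_mult_alt by (unfold Rsqr; nra).
    f_equal. unfold t, Rsqr.
    transitivity (dotr a b ^2 + crs a b ^2).
    - rewrite lagrange; unfold n2; ring.
    - field; lra. }
  assert (0 < sqrt (1 + t²)) by (apply sqrt_lt_R0; unfold Rsqr; nra).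
  rewrite Hs. unfold t in *. split; field; repeat split; lra.
Qed.

Fixpoint sm (f : nat -> R) (n : nat) : R :=
  match n with O => 0 | S n => sm f n + f n end.

Lemma polar_seq (a : nat -> C) m :
  (forall k, (k < m)%nat -> good (a k) (a (S k))) ->
  dotr (a O) (a m) = Cmod (a O) * Cmod (a m) * cos (sm (fun k => ang (a k) (a (S k))) m) /\
  crs (a O) (a m) = Cmod (a O) * Cmod (a m) * sin (sm (fun k => ang (a k) (a (S k))) m).
Proof.
  induction m; intro H.
  - simpl. rewrite cos_0, sin_0. split.
    + rewrite Rmult_1_r, Cmod_n2. unfold dotr, n2; ring.
    + unfold crs; ring.
  - destruct IHm as [I1 I2]. { intros; apply H; lia. }
    assert (G : good (a m) (a (S m))) by (apply H; lia).
    destruct (polar_step _ _ G) as [P1 P2].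
    destruct (good_n2 _ _ G) as [_ Hm].
    pose proof (id1 (a O) (a m) (a (S m))) as J1.
    pose proof (id2 (a O) (a m) (a (S m))) as J2.
    rewrite I1, I2, P1, P2 in J1. rewrite I1, I2, P1, P2 in J2.
    rewrite <- Cmod_n2 in J1, J2, Hm. simpl sm.
    rewrite cos_plus, sin_plus.
    split; apply Rmult_eq_reg_l with (Cmod (a m) * Cmod (a m)); try lra.
Qed.

Lemma abs_le_split x y : Rabs x <= y -> -y <= x <= y.
Proof. unfold Rabs; destruct (Rcase_abs x); lra. Qed.

Lemma near_good c a b : 0 < Cmod c -> Cmod (a - c)%C < Cmod c / 8 ->
  Cmod (b - c)%C < Cmod c / 8 -> good a b.
Proof.
  intros Hc H1 H2. set (e1 := (a - c)%C). set (e2 := (b - c)%C).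
  assert (Ea : a = (c + e1)%C) by (unfold e1; apply injective_projections; simpl; ring).
  assert (Eb : b = (c + e2)%C) by (unfold e2; apply injective_projections; simpl; ring).
  assert (D : dotr a b = n2 c + dotr c e2 + dotr e1 c + dotr e1 e2)
    by (rewrite Ea, Eb; unfold dotr, n2; simpl; ring).
  assert (X : crs a b = crs c e2 + crs e1 c + crs e1 e2)
    by (rewrite Ea, Eb; unfold crs; simpl; ring).
  fold e1 e2 in H1, H2.
  destruct (CS_bound c e2) as [A1 B1]. destruct (CS_bound e1 c) as [A2 B2].
  destruct (CS_bound e1 e2) as [A3 B3].
  pose proof (Cmod_ge_0 e1); pose proof (Cmod_ge_0 e2).
  rewrite <- Cmod_n2 in D.
  assert (Cmod c * Cmod e2 <= Cmod c * (Cmod c / 8)) by nra.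
  assert (Cmod e1 * Cmod c <= Cmod c / 8 * Cmod c) by nra.
  assert (Cmod e1 * Cmod e2 <= Cmod c / 8 * (Cmod c / 8)) by nra.
  unfold good. rewrite D, X.
  apply abs_le_split in A1. apply abs_le_split in A2. apply abs_le_split in A3.
  pose proof (Rabs_triang (crs c e2 + crs e1 c) (crs e1 e2)).
  pose proof (Rabs_triang (crs c e2) (crs e1 c)).
  assert (0 < Cmod c * Cmod c) by nra.
  lra.
Qed.

Lemma close2 a b c dl e : Rabs (a - c) < dl -> Rabs (b - a) < e -> Rabs (b - c) < dl + e.
Proof. unfold Rabs; repeat destruct Rcase_abs; lra. Qed.

Definition inrect s t := 0 <= s <= 1 /\ 0 <= t <= 4.

Lemma unif_good (h : R -> R -> C) :
  (forall s t, inrect s t -> h s t <> 0%C) ->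
  (forall s t, inrect s t -> forall eps, 0 < eps -> exists del, 0 < del /\
     forall s' t', inrect s' t' -> Rabs (s' - s) < del -> Rabs (t' - t) < del ->
       Cmod (h s' t' - h s t)%C < eps) ->
  exists d, 0 < d /\ forall x y x' y', inrect x y -> inrect x' y' ->
    Rabs (x' - x) < d -> Rabs (y' - y) < d -> good (h x y) (h x' y').
Proof.
  intros Hnz Hc.
  assert (ex : forall u v, exists del : posreal, (inrect u v -> forall x y, inrect x y ->
     Rabs (x - u) < 2 * del -> Rabs (y - v) < 2 * del -> Cmod (h x y - h u v)%C < Cmod (h u v) / 8)).
  { intros u v. destruct (classic (inrect u v)) as [Hr|Hn].
    - assert (Hp : 0 < Cmod (h u v)) by (apply Cmod_gt_0; auto).
      destruct (Hc u v Hr (Cmod (h u v) / 8)) as [del [Hd P]]; [lra|].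
      assert (Hd2 : 0 < del / 2) by lra.
      exists (mkposreal _ Hd2). intros _ x y Hxy H1 H2. apply P; auto; simpl in *; lra.
    - exists (mkposreal 1 Rlt_0_1). intros Hr; exfalso; auto. }
  set (delta := fun u v => proj1_sig (constructive_indefinite_description _ (ex u v))).
  assert (spec : forall u v, inrect u v -> forall x y, inrect x y ->
     Rabs (x - u) < 2 * delta u v -> Rabs (y - v) < 2 * delta u v ->
     Cmod (h x y - h u v)%C < Cmod (h u v) / 8).
  { intros u v. unfold delta. destruct (constructive_indefinite_description _ (ex u v)) as [dl P].
    simpl. exact P. }
  destruct (compactness_value_2d 0 1 0 4 delta) as [d Hd].
  exists d. split; [apply cond_pos|].
  intros x y x' y' Hxy Hxy' Dx Dy.
  apply NNPP; intro Hng. assert (Hx : 0 <= x <= 1) by apply Hxy. assert (Hy : 0 <= y <= 4) by apply Hxy.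
  apply (Hd x y Hx Hy). intros [u [v [Hu [Hv [Hxu [Hyv Hdl]]]]]]. apply Hng.
  assert (Ruv : inrect u v) by (split; auto).
  apply near_good with (h u v).
  - apply Cmod_gt_0, Hnz, Ruv.
  - pose proof (cond_pos (delta u v)). apply spec; auto; lra.
  - pose proof (cond_pos (delta u v)). apply spec; auto.
    + pose proof (close2 _ _ _ _ _ Hxu Dx). lra.
    + pose proof (close2 _ _ _ _ _ Hyv Dy). lra.
Qed.

Lemma sm_ext f g n : (forall k, (k < n)%nat -> f k = g k) -> sm f n = sm g n.
Proof. induction n; intro H; simpl; auto. rewrite IHn, H; auto; intros; apply H; lia. Qed.

Lemma sm_zero n : sm (fun _ => 0) n = 0.
Proof. induction n; simpl; auto; rewrite IHn; ring. Qed.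

Lemma sm_tele f g v n : (forall k, (k < n)%nat -> f k + v (S k) = v k + g k) ->
  sm f n + v n = v O + sm g n.
Proof.
  induction n; intro H; simpl; [ring|].
  assert (IH : sm f n + v n = v O + sm g n) by (apply IHn; intros; apply H; lia).
  specialize (H n (Nat.lt_succ_diag_r n)). lra.
Qed.

Lemma sm_split f m n : sm f (n + m) = sm f n + sm (fun k => f (n + k)%nat) m.
Proof.
  induction m; simpl.
  - rewrite Nat.add_0_r; ring.
  - rewrite Nat.add_succ_r. simpl. rewrite IHm. ring.
Qed.

Lemma square_ang a b c d : good a b -> good b c -> good a d -> good d c ->
  ang a b + ang b c = ang a d + ang d c.
Proof. intros; rewrite !ang_add; auto. Qed.

Lemma BU (h : R -> R -> C) :
  (forall s t, inrect s t -> h s t <> 0%C) ->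
  (forall s t, inrect s t -> forall eps, 0 < eps -> exists del, 0 < del /\
     forall s' t', inrect s' t' -> Rabs (s' - s) < del -> Rabs (t' - t) < del ->
       Cmod (h s' t' - h s t)%C < eps) ->
  (forall t, 0 <= t <= 4 -> h 0 t = h 0 0) ->
  (forall s, 0 <= s <= 1 -> h s 4 = h s 0) ->
  (forall t, 0 <= t <= 2 -> h 1 (t + 2) = (- h 1 t)%C) -> False.
Proof.
  intros Hnz Hc H0 Hper Hodd.
  destruct (unif_good h Hnz Hc) as [d [Hd G]].
  destruct (archimed_cor1 (d/2)) as [N [HN HN0]]; [lra|].
  assert (HNp : 0 < INR N) by (apply lt_0_INR; auto).
  set (s := fun j : nat => INR j / INR N).
  set (th := fun k : nat => 2 * INR k / INR N).
  set (r := fun j k => h (s j) (th k)).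
  assert (Hs : forall j, (j <= N)%nat -> 0 <= s j <= 1).
  { intros j Hj. unfold s. apply le_INR in Hj. pose proof (pos_INR j). split.
    - apply Rdiv_le_0_compat; lra.
    - apply Rmult_le_reg_r with (INR N); auto. unfold Rdiv. rewrite Rmult_assoc, Rinv_l; lra. }
  assert (Ht : forall k, (k <= 2 * N)%nat -> 0 <= th k <= 4).
  { intros k Hk. unfold th. apply le_INR in Hk. rewrite mult_INR in Hk. simpl in Hk.
    pose proof (pos_INR k). split.
    - apply Rdiv_le_0_compat; lra.
    - apply Rmult_le_reg_r with (INR N); auto. unfold Rdiv. rewrite Rmult_assoc, Rinv_l; lra. }
  assert (dS : forall j, Rabs (s (S j) - s j) < d).
  { intro j. unfold s. rewrite S_INR. replace ((INR j + 1) / INR N - INR j / INR N) with (/ INR N)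
      by (field; lra). rewrite Rabs_right. lra. apply Rle_ge, Rlt_le, Rinv_0_lt_compat; auto. }
  assert (dT : forall k, Rabs (th (S k) - th k) < d).
  { intro k. unfold th. rewrite S_INR. replace (2 * (INR k + 1) / INR N - 2 * INR k / INR N) with (2 * / INR N)
      by (field; lra). rewrite Rabs_right. lra. pose proof (Rinv_0_lt_compat _ HNp). lra. }
  assert (d0 : forall x, Rabs (x - x) < d) by (intro; rewrite Rminus_diag, Rabs_R0; auto).
  assert (Gr : forall j k j' k', (j <= N)%nat -> (k <= 2 * N)%nat -> (j' <= N)%nat -> (k' <= 2*N)%nat ->
     Rabs (s j' - s j) < d -> Rabs (th k' - th k) < d -> good (r j k) (r j' k')).
  { intros. apply G; auto; split; auto. }
  set (A := fun j k => ang (r j k) (r j (S k))).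
  set (W := fun j => sm (A j) (2 * N)).
  assert (W0 : W O = 0).
  { unfold W. rewrite <- (sm_zero (2 * N)). apply sm_ext. intros k Hk.
    unfold A, r. replace (s O) with 0 by (unfold s; simpl; unfold Rdiv; ring).
    rewrite (H0 (th k)), (H0 (th (S k))) by (apply Ht; lia). apply ang_same. }
  assert (WS : forall j, (j < N)%nat -> W j = W (S j)).
  { intros j Hj. set (v := fun k => ang (r j k) (r (S j) k)).
    assert (T : sm (A j) (2 * N) + v (2 * N)%nat = v O + sm (A (S j)) (2 * N)).
    { apply sm_tele. intros k Hk. unfold A, v.
      apply square_ang; apply Gr; try lia; auto; rewrite ?Rabs_minus_sym; auto. }
    assert (V : v (2 * N)%nat = v O).
    { unfold v, r. assert (E : th (2 * N)%nat = 4).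
      { unfold th. rewrite mult_INR. simpl. field. lra. }
      assert (E0 : th O = 0) by (unfold th; simpl; unfold Rdiv; ring).
      rewrite E, E0, !Hper; auto; apply Hs; lia. }
    unfold W. lra. }
  assert (Wall : forall j, (j <= N)%nat -> W j = 0).
  { induction j; intro Hj; auto. rewrite <- WS by lia. apply IHj; lia. }
  set (a := r N).
  assert (sN : s N = 1) by (unfold s; field; lra).
  assert (Aodd : forall k, (k <= N)%nat -> a (N + k)%nat = (- a k)%C).
  { intros k Hk. unfold a, r. rewrite sN.
    replace (th (N + k)%nat) with (th k + 2).
    - apply Hodd. pose proof (Ht k ltac:(lia)). split; [lra|].
      unfold th. apply le_INR in Hk. apply Rmult_le_reg_r with (INR N); auto.
      unfold Rdiv. rewrite Rmult_assoc, Rinv_l; lra.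
    - unfold th. rewrite plus_INR. field. lra. }
  assert (WN : W N = 2 * sm (A N) N).
  { unfold W. replace (2 * N)%nat with (N + N)%nat by lia. rewrite sm_split.
    rewrite (sm_ext (fun k => A N (N + k)%nat) (A N)). ring.
    intros k Hk. unfold A. fold a. replace (S (N + k)) with (N + S k)%nat by lia.
    rewrite !Aodd by lia. apply ang_opp. }
  destruct (polar_seq a N) as [P1 _].
  { intros k Hk. apply Gr; try lia; auto. }
  replace (sm (fun k => ang (a k) (a (S k))) N) with (sm (A N) N) in P1 by reflexivity.
  rewrite Wall in WN by lia.
  assert (S0 : sm (A N) N = 0) by lra.
  rewrite S0, cos_0 in P1.
  replace (a N) with (a (N + 0)%nat) in P1 by (f_equal; lia).
  rewrite Aodd in P1 by lia. rewrite Cmod_opp in P1.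
  assert (Ha : 0 < Cmod (a O)).
  { apply Cmod_gt_0. apply Hnz. split. apply Hs; lia. apply Ht; lia. }
  pose proof (Cmod_n2 (a O)).
  unfold dotr, n2 in *. simpl in P1. nra.
Qed.

Lemma Cmod_sq (x : C) : Cmod x ^ 2 = fst x * fst x + snd x * snd x.
Proof. unfold Cmod. rewrite pow2_sqrt by nra. ring. Qed.

Lemma sphere_iff p : sphere3 p <->
  fst (fst p) * fst (fst p) + snd (fst p) * snd (fst p) +
  fst (snd p) * fst (snd p) + snd (snd p) * snd (snd p) = 1.
Proof. unfold sphere3. rewrite !Cmod_sq. split; intro H; lra. Qed.

Lemma C2_eq (p q : C2) : fst p = fst q -> snd p = snd q -> p = q.
Proof. destruct p, q; simpl; intros; subst; auto. Qed.

Lemma C_eq (p q : C) : fst p = fst q -> snd p = snd q -> p = q.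
Proof. destruct p, q; simpl; intros; subst; auto. Qed.

Definition onl (p q r : C2) (t : C) : Prop :=
  r = ((fst p + t * (fst q - fst p))%C, (snd p + t * (snd q - snd p))%C).

Lemma lc_line A p q r t : linearly_closed A -> A p -> A q -> p <> q -> sphere3 r ->
  onl p q r t -> A r.
Proof.
  intros [HS HL] Ap Aq Hpq Sr Hr.
  set (L := fun w : C2 => exists t : C, w = ((fst p + t * (fst q - fst p))%C, (snd p + t * (snd q - snd p))%C)).
  apply (HL p q Ap Aq Hpq (fun w => L w /\ sphere3 w)).
  - exists L. split; [|split].
    + exists p, ((fst q - fst p)%C, (snd q - snd p)%C). split.
      * intro E. apply Hpq. pose proof (f_equal fst E) as E1; pose proof (f_equal snd E) as E2; cbn [fst snd] in E1, E2.
        apply C2_eq.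
        -- replace (fst q) with (fst p + (fst q - fst p))%C by ring. rewrite E1. ring.
        -- replace (snd q) with (snd p + (snd q - snd p))%C by ring. rewrite E2. ring.
      * intro w. unfold L. simpl. tauto.
    + exists p, q. split; auto. split; [|split; [auto|split; auto]].
      * exists 0%C. apply C2_eq; simpl; ring.
      * exists 1%C. apply C2_eq; simpl; ring.
    + tauto.
  - split; auto. exists 0%C. apply C2_eq; simpl; ring.
  - split; auto. exists 1%C. apply C2_eq; simpl; ring.
  - split; auto. exists t. exact Hr.
Qed.

Open Scope C_scope.
Definition e0 : C2 := @pair C C 1 0.
Definition zeta (p : C2) : C := snd p / (fst p - 1).
Definition pt (z s : C) : C2 := (1 + / s, z / s).

Section E.
Variable A : C2 -> Prop.
Hypothesis HS : forall q, A q -> sphere3 q.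
Hypothesis LC : forall p q r t, A p -> A q -> p <> q -> sphere3 r -> onl p q r t -> A r.
Hypothesis Ae : A e0.

Definition V (z : C) := forall q, sphere3 q -> fst q <> 1 -> zeta q = z -> A q.

Lemma sub1_ne (x : C) : x <> 1 -> x - 1 <> 0.
Proof. intros H E; apply H. replace x with ((x - 1) + 1) by ring. rewrite E; ring. Qed.

Lemma F1 (p : C2) : A p -> fst p <> 1 -> V (zeta p).
Proof.
  intros Ap Hp q Sq Hq Hz.
  pose proof (sub1_ne _ Hp) as Hp'. pose proof (sub1_ne _ Hq) as Hq'.
  apply (LC e0 p q ((fst q - 1) / (fst p - 1))); auto.
  - intro E. apply Hp. rewrite <- E. reflexivity.
  - unfold onl, e0. simpl. apply C2_eq; simpl.
    + field. auto.
    + replace (snd q) with (zeta q * (fst q - 1)) by (unfold zeta; field; auto).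
      rewrite Hz. unfold zeta. field. auto.
Qed.

Lemma pt_sphere (z s : C) : (fst s = - (1 + (fst z * fst z + snd z * snd z)) / 2)%R ->
  sphere3 (pt z s) /\ s <> 0%C.
Proof.
  destruct z as [c d], s as [a b]. simpl. intro Ha.
  assert (Hn : (a * a + b * b <> 0)%R).
  { assert (a < 0)%R. { rewrite Ha. nra. } nra. }
  split.
  - apply sphere_iff. unfold pt. simpl. subst a. field. rewrite <- ?Rsqr_pow2. unfold Rsqr.
    simpl in Hn. nra.
  - intro E. injection E; intros; subst. nra.
Qed.

Lemma Cinv_ne (s : C) : s <> 0 -> / s <> 0.
Proof. intros H E. assert (s * / s = 1) by (field; auto). rewrite E in H0.
  assert (C1 : (1:C) <> 0) by (intro E'; injection E'; lra). apply C1. rewrite <- H0. ring. Qed.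

Lemma pt_props (z s : C) : s <> 0 -> fst (pt z s) <> 1 /\ zeta (pt z s) = z.
Proof.
  intro Hs. split.
  - simpl. intro E. apply (Cinv_ne _ Hs). replace (/ s) with ((1 + / s) - 1) by ring. rewrite E; ring.
  - unfold zeta, pt. simpl. replace (1 + / s - 1) with (/ s) by ring. field. auto.
Qed.

Lemma pt_of (p : C2) : fst p <> 1 -> p = pt (zeta p) (/ (fst p - 1)).
Proof.
  intro H. pose proof (sub1_ne _ H). unfold pt, zeta. apply C2_eq; simpl; field; auto.
Qed.

Definition Lf (a b : C) (w : C2) := a * (fst w - 1) + b * snd w.

Lemma Lf_pt (a b z s : C) : s <> 0 -> s = a + b * z -> Lf a b (pt z s) = 1.
Proof. intros Hs E. unfold Lf, pt. simpl. rewrite E in *. field. auto. Qed.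

Lemma C_mul_eq0 (a x : C) : a <> 0 -> a * x = 0 -> x = 0.
Proof. intros Ha E. replace x with (/ a * (a * x)) by (field; auto). rewrite E; ring. Qed.

Lemma n2_zero (x y : C) : x * Cconj x + y * Cconj y = 0 -> x = 0 /\ y = 0.
Proof.
  destruct x as [x1 x2], y as [y1 y2]. intro E. pose proof (f_equal fst E) as E1.
  simpl in E1. assert (x1 = 0 /\ x2 = 0 /\ y1 = 0 /\ y2 = 0)%R as [? [? [? ?]]] by (repeat split; nra).
  subst; split; reflexivity.
Qed.

Lemma sub0_eq (x y : C) : x - y = 0 -> x = y.
Proof. intro E. replace x with ((x - y) + y) by ring. rewrite E; ring. Qed.

Lemma coll (a b : C) (P Q R : C2) : ~ (a = 0 /\ b = 0) -> Lf a b P = 1 -> Lf a b Q = 1 -> Lf a b R = 1 ->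
  Q <> R -> exists t, onl Q R P t.
Proof.
  unfold Lf. intros Hab HP HQ HR HQR.
  set (d1 := fst P - fst Q). set (d2 := snd P - snd Q).
  set (e1 := fst R - fst Q). set (e2 := snd R - snd Q).
  assert (Ed : a * d1 + b * d2 = 0).
  { transitivity ((a * (fst P - 1) + b * snd P) - (a * (fst Q - 1) + b * snd Q));
      [unfold d1, d2; ring|]. rewrite HP, HQ; ring. }
  assert (Ee : a * e1 + b * e2 = 0).
  { transitivity ((a * (fst R - 1) + b * snd R) - (a * (fst Q - 1) + b * snd Q));
      [unfold e1, e2; ring|]. rewrite HR, HQ; ring. }
  assert (Hdet : d1 * e2 - d2 * e1 = 0).
  { destruct (classic (a = 0)) as [Ha|Ha].
    - assert (Hb : b <> 0) by tauto. apply (C_mul_eq0 b); auto.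
      transitivity (d1 * (a * e1 + b * e2) - e1 * (a * d1 + b * d2)); [ring|].
      rewrite Ed, Ee; ring.
    - apply (C_mul_eq0 a); auto.
      transitivity (e2 * (a * d1 + b * d2) - d2 * (a * e1 + b * e2)); [ring|].
      rewrite Ed, Ee; ring. }
  set (n := e1 * Cconj e1 + e2 * Cconj e2).
  assert (Hn : n <> 0).
  { intro E. apply HQR. apply n2_zero in E. destruct E as [E1 E2]. unfold e1, e2 in *.
    apply C2_eq.
    - replace (fst R) with (fst Q + (fst R - fst Q)) by ring. rewrite E1; ring.
    - replace (snd R) with (snd Q + (snd R - snd Q)) by ring. rewrite E2; ring. }
  exists ((d1 * Cconj e1 + d2 * Cconj e2) / n).
  unfold onl. apply C2_eq; simpl.
  - replace (fst P) with (fst Q + d1) by (unfold d1; ring). f_equal. fold e1. apply sub0_eq.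
    apply (C_mul_eq0 n); auto.
    transitivity (n * d1 - (d1 * Cconj e1 + d2 * Cconj e2) * e1 * (n / n)); [unfold Cdiv; ring|].
    replace (n / n) with (RtoC 1) by (field; auto).
    transitivity (Cconj e2 * (d1 * e2 - d2 * e1)); [unfold n; ring|]. rewrite Hdet; ring.
  - replace (snd P) with (snd Q + d2) by (unfold d2; ring). f_equal. fold e2. apply sub0_eq.
    apply (C_mul_eq0 n); auto.
    transitivity (n * d2 - (d1 * Cconj e1 + d2 * Cconj e2) * e2 * (n / n)); [unfold Cdiv; ring|].
    replace (n / n) with (RtoC 1) by (field; auto).
    transitivity (- Cconj e1 * (d1 * e2 - d2 * e1)); [unfold n; ring|]. rewrite Hdet; ring.
Qed.


Definition dt (z1 z2 z3 : C) : R :=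
  ((snd z2 - snd z1) * (fst z3 - fst z1) - (fst z2 - fst z1) * (snd z3 - snd z1))%R.

Lemma F2 (z1 z2 z3 : C) : V z2 -> V z3 -> dt z1 z2 z3 <> 0%R -> V z1.
Proof.
  intros V2 V3 Hd q Sq Hq Hz.
  pose proof (sub1_ne _ Hq) as Hq'.
  set (s1 := / (fst q - 1)).
  assert (Hs1 : s1 <> 0) by (apply Cinv_ne; auto).
  set (r2 := (- (1 + (fst z2 * fst z2 + snd z2 * snd z2)) / 2)%R).
  set (r3 := (- (1 + (fst z3 * fst z3 + snd z3 * snd z3)) / 2)%R).
  set (c2 := (r2 - fst s1)%R). set (c3 := (r3 - fst s1)%R).
  set (x2 := (fst z2 - fst z1)%R). set (y2 := (snd z2 - snd z1)%R).
  set (x3 := (fst z3 - fst z1)%R). set (y3 := (snd z3 - snd z1)%R).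
  set (D := dt z1 z2 z3).
  set (B := @pair R R ((- c2 * y3 + y2 * c3) / D)%R ((x2 * c3 - x3 * c2) / D)%R).
  set (a := s1 - B * z1).
  set (s2 := a + B * z2). set (s3 := a + B * z3).
  assert (Gs : forall zi, fst (a + B * zi) =
     (fst s1 + fst B * (fst zi - fst z1) - snd B * (snd zi - snd z1))%R)
    by (intro; unfold a; simpl; ring).
  assert (F2e : fst s2 = r2).
  { unfold s2. rewrite Gs. fold x2 y2. unfold B. cbn [fst snd]. unfold c2, c3, D in *.
    unfold dt in *. fold x2 y2 x3 y3 in Hd |- *. field. auto. }
  assert (F3e : fst s3 = r3).
  { unfold s3. rewrite Gs. fold x3 y3. unfold B. cbn [fst snd]. unfold c2, c3, D in *.
    unfold dt in *. fold x2 y2 x3 y3 in Hd |- *. field. auto. }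
  destruct (pt_sphere z2 s2 F2e) as [SQ Hs2].
  destruct (pt_sphere z3 s3 F3e) as [SR Hs3].
  destruct (pt_props z2 s2 Hs2) as [Q1 Q2].
  destruct (pt_props z3 s3 Hs3) as [R1 R2].
  assert (AQ : A (pt z2 s2)) by (apply V2; auto).
  assert (AR : A (pt z3 s3)) by (apply V3; auto).
  assert (QR : pt z2 s2 <> pt z3 s3).
  { intro E. apply Hd. assert (z2 = z3) by (rewrite <- Q2, <- R2, E; reflexivity).
    unfold D, dt. subst; ring. }
  assert (Eq : q = pt z1 s1) by (rewrite (pt_of q Hq) at 1; rewrite Hz; reflexivity).
  destruct (coll a B q (pt z2 s2) (pt z3 s3)) as [t Ht].
  - intros [Ha HB]. apply Hs1. replace s1 with (a + B * z1) by (unfold a; ring). rewrite Ha, HB; ring.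
  - rewrite Eq. apply Lf_pt; auto. unfold a; ring.
  - apply Lf_pt; auto.
  - apply Lf_pt; auto.
  - auto.
  - apply (LC _ _ _ t AQ AR QR Sq Ht).
Qed.

Lemma sq0 (x y : R) : (x * x + y * y = 0 -> x = 0 /\ y = 0)%R.
Proof.
  intro H. assert (x * x = 0)%R by nra. assert (y * y = 0)%R by nra.
  split; [destruct (Rmult_integral _ _ H0)|destruct (Rmult_integral _ _ H1)]; auto.
Qed.

Lemma fst1_e0 (p : C2) : sphere3 p -> fst p = 1 -> p = e0.
Proof.
  destruct p as [[a b] [c d]]. intros S E. apply sphere_iff in S. simpl in *.
  injection E; intros; subst. unfold e0. f_equal.
  assert (c = 0 /\ d = 0)%R as [? ?] by (split; nra). subst; reflexivity.
Qed.

Lemma cover (x y : C2) : A x -> A y -> x <> y -> (forall t, ~ onl x y e0 t) ->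
  forall r, sphere3 r -> A r.
Proof.
  intros Ax Ay Hxy Hl r Sr.
  assert (Hx : fst x <> 1).
  { intro E. apply (Hl 0). rewrite (fst1_e0 x (HS x Ax) E). unfold onl; apply C2_eq; simpl; ring. }
  assert (Hy : fst y <> 1).
  { intro E. apply (Hl 1). rewrite (fst1_e0 y (HS y Ay) E). unfold onl; apply C2_eq; simpl; ring. }
  pose proof (sub1_ne _ Hx) as Hx'. pose proof (sub1_ne _ Hy) as Hy'.
  assert (Zxy : zeta x <> zeta y).
  { intro E. unfold zeta in E.
    set (u := fst x - 1) in *. set (w := fst y - 1) in *.
    assert (Huw : u - w <> 0).
    { intro E2. apply Hxy. apply C2_eq.
      - apply sub0_eq. replace (fst x - fst y) with (u - w) by (unfold u, w; ring). auto.
      - assert (u = w) by (apply sub0_eq; auto).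
        replace (snd x) with (snd x / u * u) by (field; auto).
        replace (snd y) with (snd y / w * w) by (field; auto). rewrite E. congruence. }
    assert (Ey : snd y = snd x * w / u) by (replace (snd y) with (snd y / w * w) by (field; auto);
      rewrite <- E; field; auto).
    apply (Hl (u / (u - w))). unfold onl, e0. apply C2_eq; simpl.
    - replace (fst y) with (w + 1) by (unfold w; ring). replace (fst x) with (u + 1) by (unfold u; ring).
      field. auto.
    - rewrite Ey. field. auto. }
  pose proof (F1 x Ax Hx) as Vx. pose proof (F1 y Ay Hy) as Vy.
  destruct (classic (fst r = 1)) as [Er|Er].
  - rewrite (fst1_e0 r Sr Er). auto.
  - assert (Vz : V (zeta r)). 2: { apply Vz; auto. }
    set (z1 := zeta r). set (zx := zeta x) in *. set (zy := zeta y) in *.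
    clearbody z1 zx zy.
    destruct (Req_dec (dt z1 zx zy) 0) as [Hd|Hd].
    2: { apply (F2 z1 zx zy); auto. }
    destruct (classic (z1 = zx)) as [E1|E1].
    { rewrite E1; auto. }
    set (z' := zx + Ci * (zy - zx)).
    assert (Hw : ~ (fst zy - fst zx = 0 /\ snd zy - snd zx = 0)%R).
    { intros [H1 H2]. apply Zxy. apply C_eq; lra. }
    assert (Hu : ~ (fst zx - fst z1 = 0 /\ snd zx - snd z1 = 0)%R).
    { intros [H1 H2]. apply E1. apply C_eq; lra. }
    assert (V' : V z').
    { apply (F2 z' zx zy); auto. unfold dt, z'. simpl.
      destruct zx as [a b], zy as [c d]. simpl in *.
      intro E. apply Hw. assert (Q: ((c-a)*(c-a) + (d-b)*(d-b) = 0)%R) by (ring_simplify in E; nra).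
      apply sq0; auto. }
    apply (F2 z1 zx z'); auto.
    unfold dt, z' in *. simpl in *.
    destruct zx as [a b], zy as [c d], z1 as [x1 y1]. simpl in *.
    intro E. apply Hu.
    set (u1 := (a - x1)%R) in *. set (u2 := (b - y1)%R) in *.
    set (w1 := (c - a)%R) in *. set (w2 := (d - b)%R) in *.
    assert (I1 : (u2 * w1 - u1 * w2 = 0)%R) by (unfold u1, u2, w1, w2 in *; nra).
    assert (I2 : (u1 * w1 + u2 * w2 = 0)%R) by (unfold u1, u2, w1, w2 in *; nra).
    assert (L : ((u1 * w1 + u2 * w2)^2 + (u2 * w1 - u1 * w2)^2 = (u1*u1+u2*u2)*(w1*w1+w2*w2))%R) by ring.
    rewrite I1, I2 in L.
    assert (Hw' : (w1*w1+w2*w2 > 0)%R).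
    { destruct (Req_dec w1 0); destruct (Req_dec w2 0); try nra; exfalso; apply Hw; split; auto. }
    assert (u1*u1+u2*u2 = 0)%R by nra. apply sq0; auto.
Qed.

End E.

Definition Mi (z q : C2) : C2 :=
  ((fst q * fst z - snd q * Cconj (snd z))%C, (fst q * snd z + snd q * Cconj (fst z))%C).
Definition Mf (z p : C2) : C2 :=
  ((Cconj (fst z) * fst p + Cconj (snd z) * snd p)%C, (- snd z * fst p + fst z * snd p)%C).

Lemma zz (z : C2) : sphere3 z -> Cconj (fst z) * fst z + Cconj (snd z) * snd z = 1.
Proof.
  intro S. apply sphere_iff in S. destruct z as [[a b] [c d]]. simpl in *.
  apply C_eq; simpl; lra.
Qed.

Lemma MiM z p : sphere3 z -> Mi z (Mf z p) = p.
Proof.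
  intro S. pose proof (zz z S) as Z. unfold Mi, Mf. apply C2_eq; cbn [fst snd].
  - transitivity (fst p * (Cconj (fst z) * fst z + Cconj (snd z) * snd z)); [ring|]. rewrite Z; ring.
  - transitivity (snd p * (Cconj (fst z) * fst z + Cconj (snd z) * snd z)); [ring|]. rewrite Z; ring.
Qed.

Lemma MMi z q : sphere3 z -> Mf z (Mi z q) = q.
Proof.
  intro S. pose proof (zz z S) as Z. unfold Mi, Mf. apply C2_eq; cbn [fst snd].
  - transitivity (fst q * (Cconj (fst z) * fst z + Cconj (snd z) * snd z)); [ring|]. rewrite Z; ring.
  - transitivity (snd q * (Cconj (fst z) * fst z + Cconj (snd z) * snd z)); [ring|]. rewrite Z; ring.
Qed.

Lemma sphere_Mi z q : sphere3 z -> (sphere3 (Mi z q) <-> sphere3 q).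
Proof.
  intro S. rewrite !sphere_iff. apply sphere_iff in S.
  destruct z as [[a b] [c d]], q as [[e f] [g h]]. simpl in *.
  match goal with |- ?L = _ <-> _ => replace L with
    ((e*e+f*f+g*g+h*h)*(a*a+b*b+c*c+d*d))%R by ring end.
  rewrite S. split; intro; lra.
Qed.

Lemma onl_Mi z p q r t : onl p q r t -> onl (Mi z p) (Mi z q) (Mi z r) t.
Proof. unfold onl, Mi. intro H; subst r. apply C2_eq; cbn [fst snd]; ring. Qed.

Lemma Mi_e0 z : Mi z e0 = z.
Proof. unfold Mi, e0. apply C2_eq; cbn [fst snd]; ring. Qed.

Lemma line_abs p q : sphere3 p -> sphere3 q -> p <> q ->
  abstract_line (fun w => (exists t, onl p q w t) /\ sphere3 w).
Proof.
  intros Sp Sq Hpq.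
  set (L := fun w : C2 => exists t : C, onl p q w t).
  exists L. split; [|split].
  - exists p, ((fst q - fst p)%C, (snd q - snd p)%C). split.
    + intro E. apply Hpq. pose proof (f_equal fst E) as E1; pose proof (f_equal snd E) as E2;
        cbn [fst snd] in E1, E2.
      apply C2_eq.
      * replace (fst q) with (fst p + (fst q - fst p))%C by ring. rewrite E1. ring.
      * replace (snd q) with (snd p + (snd q - snd p))%C by ring. rewrite E2. ring.
    + intro w. unfold L, onl. simpl. tauto.
  - exists p, q. split; auto. split; [|split; [auto|split; auto]].
    + exists 0%C. apply C2_eq; simpl; ring.
    + exists 1%C. apply C2_eq; simpl; ring.
  - unfold L. tauto.
Qed.

Theorem A_sphere (A : C2 -> Prop) :
  linearly_closed A ->
  (exists x, A x) ->
  ~ (exists x, forall p, A p <-> p = x) ->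
  ~ (exists l, abstract_line l /\ forall p, A p <-> l p) ->
  forall r, sphere3 r -> A r.
Proof.
  intros HA [x Ax] Hpt Hln.
  pose proof HA as [HS _].
  assert (Ey : exists y, A y /\ y <> x).
  { apply NNPP; intro N. apply Hpt. exists x. intro p. split.
    - intro Ap. apply NNPP; intro Ne. apply N. exists p; auto.
    - intro; subst; auto. }
  destruct Ey as [y [Ay Hyx]].
  assert (Hxy : x <> y) by auto.
  set (l := fun w => (exists t, onl x y w t) /\ sphere3 w).
  assert (Hl : forall w, l w -> A w).
  { intros w [[t Ht] Sw]. apply (lc_line A x y w t); auto. }
  assert (Ez : exists z, A z /\ ~ l z).
  { apply NNPP; intro N. apply Hln. exists l. split.
    - apply line_abs; auto.
    - intro p. split; auto. intro Ap. apply NNPP; intro Nl. apply N. exists p; auto. }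
  destruct Ez as [z [Az Nlz]].
  pose proof (HS z Az) as Sz.
  set (A' := fun q => A (Mi z q)).
  assert (Cov : forall r, sphere3 r -> A' r).
  { apply (cover A' ) with (x := Mf z x) (y := Mf z y).
    - intros q Aq. apply (sphere_Mi z q Sz). apply HS. exact Aq.
    - intros p q r t Ap Aq Hpq Sr Ht. unfold A' in *.
      apply (lc_line A (Mi z p) (Mi z q) (Mi z r) t); auto.
      + intro E. apply Hpq. rewrite <- (MMi z p Sz), <- (MMi z q Sz), E. reflexivity.
      + apply sphere_Mi; auto.
      + apply onl_Mi; auto.
    - unfold A'. rewrite Mi_e0. auto.
    - unfold A'. rewrite MiM; auto.
    - unfold A'. rewrite MiM; auto.
    - intro E. apply Hxy. rewrite <- (MiM z x Sz), <- (MiM z y Sz), E. reflexivity.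
    - intros t Ht. apply Nlz. split; auto. exists t.
      apply onl_Mi with (z := z) in Ht. rewrite !MiM, Mi_e0 in Ht; auto. }
  intros r Sr. specialize (Cov (Mf z r)). unfold A' in Cov. rewrite MiM in Cov; auto.
  apply Cov. apply (sphere_Mi z); auto. rewrite MiM; auto.
Qed.
Close Scope C_scope.
Open Scope R_scope.

Definition T (t : R) : R := Rabs (2 - Rabs (t - 2)) - 1.

Lemma T_lip a b : Rabs (T a - T b) <= Rabs (a - b).
Proof.
  unfold T. replace (Rabs (2 - Rabs (a - 2)) - 1 - (Rabs (2 - Rabs (b - 2)) - 1))
    with (Rabs (2 - Rabs (a - 2)) - Rabs (2 - Rabs (b - 2))) by ring.
  eapply Rle_trans; [apply Rabs_triang_inv2|].
  replace (2 - Rabs (a - 2) - (2 - Rabs (b - 2))) with (- (Rabs (a - 2) - Rabs (b - 2))) by ring.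
  rewrite Rabs_Ropp. eapply Rle_trans; [apply Rabs_triang_inv2|].
  replace (a - 2 - (b - 2)) with (a - b) by ring. lra.
Qed.

Ltac rabs := unfold Rabs in *; repeat match goal with |- context [Rcase_abs ?x] => destruct (Rcase_abs x) end.

Lemma T_bound t : -1 <= t <= 5 -> Rabs (T t) <= 1.
Proof. intro. unfold T. rabs; lra. Qed.

Lemma T_per1 : T 4 = T 0.
Proof. unfold T. rabs; lra. Qed.
Lemma T_per2 : T 3 = T (-1).
Proof. unfold T. rabs; lra. Qed.

Lemma T_odd t : -1 <= t <= 2 -> T (t + 2) = - T t.
Proof. intro. unfold T. rabs; lra. Qed.

Lemma T_nz t : 0 <= t <= 4 -> ~ (T t = 0 /\ T (t - 1) = 0).
Proof. intros H [H1 H2]. unfold T in *. revert H1 H2. rabs; lra. Qed.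

Definition pp (y1 y2 y3 : R) : C2 :=
  let n := y1 * y1 + y2 * y2 + y3 * y3 in
  (@pair C C (2 * y1 / (1 + n), 2 * y2 / (1 + n)) (2 * y3 / (1 + n), (n - 1) / (1 + n))).

Definition sqd (p q : C2) : R :=
  (fst (fst p) - fst (fst q))^2 + (snd (fst p) - snd (fst q))^2 +
  (fst (snd p) - fst (snd q))^2 + (snd (snd p) - snd (snd q))^2.

Lemma dist2_sqd p q : dist2 p q = sqrt (sqd p q).
Proof. unfold dist2, sqd. rewrite !Cmod_sq. simpl. f_equal. ring. Qed.

Lemma sqd_lt p q d : 0 < d -> sqd p q < d * d -> dist2 p q < d.
Proof.
  intros Hd H. rewrite dist2_sqd. rewrite <- (sqrt_square d) by lra.
  apply sqrt_lt_1_alt. split; auto. unfold sqd; repeat apply Rplus_le_le_0_compat; apply pow2_ge_0.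
Qed.

Lemma pp_sphere y1 y2 y3 : sphere3 (pp y1 y2 y3).
Proof.
  apply sphere_iff. unfold pp. simpl. field. nra.
Qed.

Lemma pp_chord y1 y2 y3 z1 z2 z3 :
  sqd (pp y1 y2 y3) (pp z1 z2 z3) =
  4 * ((y1 - z1)^2 + (y2 - z2)^2 + (y3 - z3)^2) /
  ((1 + (y1*y1+y2*y2+y3*y3)) * (1 + (z1*z1+z2*z2+z3*z3))).
Proof. unfold sqd, pp. simpl. field. split; nra. Qed.

Lemma pp_chord_le y1 y2 y3 z1 z2 z3 :
  sqd (pp y1 y2 y3) (pp z1 z2 z3) <= 4 * ((y1 - z1)^2 + (y2 - z2)^2 + (y3 - z3)^2).
Proof.
  rewrite pp_chord. set (N := (y1 - z1)^2 + (y2 - z2)^2 + (y3 - z3)^2).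
  assert (0 <= N) by (unfold N; repeat apply Rplus_le_le_0_compat; apply pow2_ge_0).
  set (D := (1 + (y1*y1+y2*y2+y3*y3)) * (1 + (z1*z1+z2*z2+z3*z3))).
  assert (1 <= D) by (unfold D; nra).
  unfold Rdiv. apply Rmult_le_reg_r with D; [lra|].
  rewrite Rmult_assoc, Rinv_l by lra. nra.
Qed.

Lemma pp_neg y1 y2 y3 : pp y1 y2 y3 = pp (-y1) (-y2) (-y3) -> y1 = 0 /\ y2 = 0 /\ y3 = 0.
Proof.
  intro E. set (D := 1 + (y1*y1+y2*y2+y3*y3)).
  assert (HD : 0 < D) by (unfold D; nra).
  pose proof (f_equal (fun p => fst (fst p)) E) as E1.
  pose proof (f_equal (fun p => snd (fst p)) E) as E2.
  pose proof (f_equal (fun p => fst (snd p)) E) as E3.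
  unfold pp in E1, E2, E3. simpl in E1, E2, E3.
  replace (- y1 * - y1 + - y2 * - y2 + - y3 * - y3) with (y1*y1+y2*y2+y3*y3) in * by ring.
  fold D in E1, E2, E3.
  apply (f_equal (fun x => x * D)) in E1. apply (f_equal (fun x => x * D)) in E2.
  apply (f_equal (fun x => x * D)) in E3.
  unfold Rdiv in *. rewrite !Rmult_assoc, !Rinv_l in E1, E2, E3 by lra.
  repeat split; lra.
Qed.

Lemma sq_le1 x : Rabs x <= 1 -> x * x <= 1.
Proof. unfold Rabs; destruct (Rcase_abs x); intros; nra. Qed.

Lemma abs_lt_sq x c : Rabs x < c -> x * x < c * c.
Proof. unfold Rabs; destruct (Rcase_abs x); intros; nra. Qed.

Lemma wlip s s' a a' : 0 <= s <= 1 -> 0 <= s' <= 1 -> Rabs (T a') <= 1 ->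
  Rabs (s' * T a' - s * T a) <= Rabs (s' - s) + Rabs (a' - a).
Proof.
  intros Hs Hs' Hb.
  replace (s' * T a' - s * T a) with ((s' - s) * T a' + s * (T a' - T a)) by ring.
  eapply Rle_trans; [apply Rabs_triang|]. rewrite !Rabs_mult.
  pose proof (T_lip a' a). pose proof (Rabs_pos (s' - s)). pose proof (Rabs_pos (T a' - T a)).
  rewrite (Rabs_right s) by lra. nra.
Qed.

Lemma key_bound rho d a1 a2 a3 b1 b2 b3 : 0 < rho ->
  Rabs (a1 - b1) < 2 * d -> Rabs (a2 - b2) < 2 * d -> Rabs (a3 - b3) < 2 * d ->
  4 * ((rho * a1 - rho * b1)^2 + (rho * a2 - rho * b2)^2 + (rho * a3 - rho * b3)^2) < 48 * (rho * d) * (rho * d) /\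
  4 * ((- (rho * a1) - - (rho * b1))^2 + (- (rho * a2) - - (rho * b2))^2 + (- (rho * a3) - - (rho * b3))^2) < 48 * (rho * d) * (rho * d).
Proof.
  intros Hr H1 H2 H3. apply abs_lt_sq in H1. apply abs_lt_sq in H2. apply abs_lt_sq in H3.
  assert (R2 : 0 < rho * rho) by nra.
  split.
  - replace (4 * ((rho * a1 - rho * b1)^2 + (rho * a2 - rho * b2)^2 + (rho * a3 - rho * b3)^2))
      with (4 * (rho * rho) * ((a1 - b1) * (a1 - b1) + (a2 - b2) * (a2 - b2) + (a3 - b3) * (a3 - b3))) by ring.
    nra.
  - replace (4 * ((- (rho * a1) - - (rho * b1))^2 + (- (rho * a2) - - (rho * b2))^2 + (- (rho * a3) - - (rho * b3))^2))
      with (4 * (rho * rho) * ((a1 - b1) * (a1 - b1) + (a2 - b2) * (a2 - b2) + (a3 - b3) * (a3 - b3))) by ring.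
    nra.
Qed.

Theorem lemma3p5 (A : C2 -> Prop) :
  linearly_closed A ->
  (exists x, A x) ->
  ~ (exists x, forall p, A p <-> p = x) ->
  ~ (exists l, abstract_line l /\ forall p, A p <-> l p) ->
  exists x, A x /\
    forall U : C2 -> Prop, nbhd_in A U x ->
      ~ (exists f : C2 -> C, cont_inj_on U f).
Proof.
  intros HA Hne Hpt Hln.
  pose proof (A_sphere A HA Hne Hpt Hln) as Hall.
  exists (pp 0 0 0). split; [apply Hall, pp_sphere|].
  intros U [HUA [HUx [eps [Heps HUe]]]] [f [Finj Fc]].
  set (rho := eps / 4).
  assert (Hrho : 0 < rho) by (unfold rho; lra).
  set (w1 := fun s t => s * T t). set (w2 := fun s t => s * T (t - 1)). set (w3 := fun s : R => 1 - s).
  set (P := fun s t => pp (rho * w1 s t) (rho * w2 s t) (rho * w3 s)).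
  set (Q := fun s t => pp (- (rho * w1 s t)) (- (rho * w2 s t)) (- (rho * w3 s))).
  assert (Tb : forall s t, inrect s t -> Rabs (T t) <= 1 /\ Rabs (T (t - 1)) <= 1).
  { intros s t [_ Ht]. split; apply T_bound; lra. }
  assert (Wb : forall s t, inrect s t -> w1 s t * w1 s t + w2 s t * w2 s t + w3 s * w3 s <= 3).
  { intros s t H. destruct (Tb s t H) as [B1 B2]. destruct H as [Hs _].
    apply sq_le1 in B1. apply sq_le1 in B2. unfold w1, w2, w3.
    assert (s * s <= 1) by nra. assert ((1 - s) * (1 - s) <= 1) by nra.
    assert (s * T t * (s * T t) <= 1).
    { replace (s * T t * (s * T t)) with ((s * s) * (T t * T t)) by ring.
      assert (0 <= s * s) by nra. assert (0 <= T t * T t) by nra. nra. }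
    assert (s * T (t - 1) * (s * T (t - 1)) <= 1).
    { replace (s * T (t-1) * (s * T (t-1))) with ((s * s) * (T (t-1) * T (t-1))) by ring.
      assert (0 <= s * s) by nra. assert (0 <= T (t-1) * T (t-1)) by nra. nra. }
    lra. }
  assert (X0 : forall y1 y2 y3, y1 * y1 + y2 * y2 + y3 * y3 <= rho * rho * 3 ->
     U (pp y1 y2 y3)).
  { intros y1 y2 y3 Hy. apply HUe. apply Hall, pp_sphere.
    apply sqd_lt; auto. eapply Rle_lt_trans; [apply pp_chord_le|].
    replace (4 * ((y1 - 0) ^ 2 + (y2 - 0) ^ 2 + (y3 - 0) ^ 2)) with (4 * (y1 * y1 + y2 * y2 + y3 * y3)) by ring.
    unfold rho in Hy. nra. }
  assert (InU : forall s t, inrect s t -> U (P s t) /\ U (Q s t)).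
  { intros s t H. pose proof (Wb s t H) as W. assert (0 < rho * rho) by nra.
    split; apply X0.
    - replace (rho * w1 s t * (rho * w1 s t) + rho * w2 s t * (rho * w2 s t) + rho * w3 s * (rho * w3 s))
        with (rho * rho * (w1 s t * w1 s t + w2 s t * w2 s t + w3 s * w3 s)) by ring. nra.
    - replace (- (rho * w1 s t) * - (rho * w1 s t) + - (rho * w2 s t) * - (rho * w2 s t) + - (rho * w3 s) * - (rho * w3 s))
        with (rho * rho * (w1 s t * w1 s t + w2 s t * w2 s t + w3 s * w3 s)) by ring. nra. }
  apply (BU (fun s t => (f (P s t) - f (Q s t))%C)).
  -
    intros s t H E. apply sub0_eq in E. destruct (InU s t H) as [UP UQ].
    pose proof (Finj _ _ UP UQ E) as E'. unfold P, Q in E'. apply pp_neg in E' as [E1 [E2 E3]].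
    apply Rmult_integral in E3. destruct E3 as [E3|E3]; [lra|]. unfold w3 in E3.
    assert (s = 1) by lra. subst s.
    apply Rmult_integral in E1. destruct E1 as [E1|E1]; [lra|].
    apply Rmult_integral in E2. destruct E2 as [E2|E2]; [lra|].
    unfold w1, w2 in *. rewrite Rmult_1_l in E1, E2.
    destruct H as [_ Ht]. apply (T_nz t Ht); auto.
  -
    intros s t Hst eps' Heps'.
    destruct (InU s t Hst) as [UP UQ].
    destruct (Fc (P s t) UP (eps' / 2)) as [d1 [Hd1 F1]]; [lra|].
    destruct (Fc (Q s t) UQ (eps' / 2)) as [d2 [Hd2 F2]]; [lra|].
    set (m := Rmin d1 d2).
    assert (Hm : 0 < m) by (apply Rmin_glb_lt; auto).
    assert (Hm1 : m <= d1) by apply Rmin_l. assert (Hm2 : m <= d2) by apply Rmin_r.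
    set (d := m / (8 * rho)).
    assert (Hd : 0 < d) by (unfold d; apply Rdiv_lt_0_compat; lra).
    assert (Hrd : rho * d = m / 8) by (unfold d; field; lra).
    exists d. split; auto.
    intros s' t' Hst' Ds Dt.
    destruct (InU s' t' Hst') as [UP' UQ'].
    destruct (Tb s' t' Hst') as [B1 B2].
    assert (L1 : Rabs (w1 s' t' - w1 s t) < 2 * d).
    { unfold w1. eapply Rle_lt_trans; [apply wlip|]; try apply Hst; try apply Hst'; auto. lra. }
    assert (L2 : Rabs (w2 s' t' - w2 s t) < 2 * d).
    { unfold w2. eapply Rle_lt_trans; [apply wlip|]; try apply Hst; try apply Hst'; auto.
      replace (t' - 1 - (t - 1)) with (t' - t) by ring. lra. }
    assert (L3 : Rabs (w3 s' - w3 s) < 2 * d).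
    { unfold w3. replace (1 - s' - (1 - s)) with (- (s' - s)) by ring. rewrite Rabs_Ropp. lra. }
    destruct (key_bound rho d _ _ _ _ _ _ Hrho L1 L2 L3) as [K1 K2].
    rewrite Hrd in K1, K2.
    assert (DP : dist2 (P s' t') (P s t) < d1).
    { apply sqd_lt; auto. unfold P. eapply Rle_lt_trans; [apply pp_chord_le|].
      eapply Rlt_le_trans; [apply K1|]. nra. }
    assert (DQ : dist2 (Q s' t') (Q s t) < d2).
    { apply sqd_lt; auto. unfold Q. eapply Rle_lt_trans; [apply pp_chord_le|].
      eapply Rlt_le_trans; [apply K2|]. nra. }
    specialize (F1 _ UP' DP). specialize (F2 _ UQ' DQ).
    replace (f (P s' t') - f (Q s' t') - (f (P s t) - f (Q s t)))%C
      with ((f (P s' t') - f (P s t)) + - (f (Q s' t') - f (Q s t)))%C by ring.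
    eapply Rle_lt_trans; [apply Cmod_triangle|]. rewrite Cmod_opp. lra.
  -
    intros t Ht. unfold P, Q, w1, w2. rewrite !Rmult_0_l. reflexivity.
  -
    intros s Hs. unfold P, Q, w1, w2.
    replace (4 - 1) with 3 by ring. replace (0 - 1) with (-1) by ring.
    rewrite T_per1, T_per2. reflexivity.
  -
    intros t Ht.
    assert (E1 : w1 1 (t + 2) = - w1 1 t) by (unfold w1; rewrite T_odd by lra; ring).
    assert (E2 : w2 1 (t + 2) = - w2 1 t).
    { unfold w2. replace (t + 2 - 1) with ((t - 1) + 2) by ring. rewrite T_odd by lra; ring. }
    assert (E3 : w3 1 = - w3 1) by (unfold w3; ring).
    assert (PQ : P 1 (t + 2) = Q 1 t) by (unfold P, Q; rewrite E1, E2, E3 at 1; f_equal; ring).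
    assert (QP : Q 1 (t + 2) = P 1 t) by (unfold P, Q; rewrite E1, E2, E3 at 1; f_equal; ring).
    rewrite PQ, QP. ring.
Qed.
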